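(* Let $G,H$ be graphs such that there is a homomorphism $\gamma:V(G)\to V(H)$. If $H\in$ CBU, then $G\in$ CBU.
   Context: Let $e_1,\ldots,e_d$ be the standard basis of $\mathbb{R}^d$. For $d\ge 1$, a graph belongs to $d$-CBU if one can assign to each vertex an axis-parallel box (product of $d$ closed intervals of positive length) in $\mathbb{R}^d$ such that the boxes have pairwise disjoint interiors, two distinct vertices are adjacent iff their boxes intersect, and any two intersecting boxes intersect in a $(d-1)$-dimensional box orthogonal to $e_1$. CBU is the union of $d$-CBU over all $d\ge 1$. *)

(* Defs.v *)
From Stdlib Require Import Reals.
From mathcomp Require Import all_boot.
Set Implicit Arguments. Unset Strict Implicit. Unset Printing Implicit Defensive.
Local Open Scope R_scope.

(* Points of R^d are functions nat -> R; only coordinates i < d matter.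
   Coordinate 0 corresponds to the direction e_1. *)

Record box (d : nat) := Box { lo : nat -> R; hi : nat -> R;
  lo_lt_hi : forall i, (i < d)%N -> lo i < hi i }.

Definition in_box d (b : box d) (x : nat -> R) : Prop :=
  forall i, (i < d)%N -> lo b i <= x i <= hi b i.

Definition in_interior d (b : box d) (x : nat -> R) : Prop :=
  forall i, (i < d)%N -> lo b i < x i < hi b i.

Definition interiors_disjoint d (b1 b2 : box d) : Prop :=
  ~ exists x, in_interior b1 x /\ in_interior b2 x.

Definition boxes_intersect d (b1 b2 : box d) : Prop :=
  exists x, in_box b1 x /\ in_box b2 x.

Definition meet_orth_e1 d (b1 b2 : box d) : Prop :=
  exists (c : R) (l u : nat -> R),
    (forall i, (1 <= i < d)%N -> l i < u i) /\
    (forall x : nat -> R, (in_box b1 x /\ in_box b2 x) <->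
       (x 0%N = c /\ forall i, (1 <= i < d)%N -> l i <= x i <= u i)).

Definition in_dCBU (d : nat) (V : finType) (adj : rel V) : Prop :=
  (1 <= d)%N /\
  exists B : V -> box d,
    (forall u v, u <> v -> interiors_disjoint (B u) (B v)) /\
    (forall u v, u <> v -> (adj u v <-> boxes_intersect (B u) (B v))) /\
    (forall u v, u <> v -> boxes_intersect (B u) (B v) -> meet_orth_e1 (B u) (B v)).

Definition in_CBU (V : finType) (adj : rel V) : Prop :=
  exists d, in_dCBU d adj.

(* Main.v *)
Require Import Defs.
From Stdlib Require Import Reals Lra.
From mathcomp Require Import all_boot zify.
Set Implicit Arguments. Unset Strict Implicit. Unset Printing Implicit Defensive.
Local Open Scope R_scope.

Definition elo (VG : finType) (adjG : rel VG) (g w : VG) : R :=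
  if w == g then 0 else if adjG w g then 0 else 2.
Definition ehi (VG : finType) (g w : VG) : R := if w == g then 1 else 3.

Definition nlo (VG VH : finType) (adjG : rel VG) d (B : VH -> box d) (gamma : VG -> VH)
  (g : VG) (i : nat) : R :=
  if (i < d)%N then lo (B (gamma g)) i else elo adjG g (nth g (enum VG) (i - d)).
Definition nhi (VG VH : finType) d (B : VH -> box d) (gamma : VG -> VH)
  (g : VG) (i : nat) : R :=
  if (i < d)%N then hi (B (gamma g)) i else ehi g (nth g (enum VG) (i - d)).

Lemma nlo_lt_hi (VG VH : finType) (adjG : rel VG) d (B : VH -> box d) gamma g i :
  (i < d + #|VG|)%N -> nlo adjG B gamma g i < nhi B gamma g i.
Proof.
move=> _; rewrite /nlo /nhi; case: ifP => Hi; first exact: lo_lt_hi.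
rewrite /elo /ehi; case: (_ == _); first lra; case: (adjG _ _); lra.
Qed.

Lemma elo_lt_ehi (VG : finType) (adjG : rel VG) (symG : symmetric adjG) g g' w :
  adjG g g' -> elo adjG g w < ehi g' w.
Proof.
move=> A; rewrite /elo /ehi.
case: eqP => [_|ne]; first (case: (_ == _); lra).
case: ifP => Hw; first (case: (_ == _); lra).
case: eqP => [e|_]; last lra.
subst w; by rewrite symG A in Hw.
Qed.

Lemma elo_lt_ehi_self (VG : finType) (adjG : rel VG) g w : elo adjG g w < ehi g w.
Proof. rewrite /elo /ehi; case: (_ == _); first lra; case: (adjG _ _); lra. Qed.

Lemma maxmin_lt a b c e : a < c -> a < e -> b < c -> b < e -> Rmax a b < Rmin c e.
Proof. intros; unfold Rmax, Rmin; repeat destruct Rle_dec; lra. Qed.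

Lemma maxmin_iff a b c e x : (Rmax a b <= x <= Rmin c e) <-> (a <= x <= c /\ b <= x <= e).
Proof.
unfold Rmax, Rmin; repeat destruct Rle_dec; split; intros; lra.
Qed.

Lemma maxmin_wit a b c e : Rmax a b < Rmin c e ->
  (a <= Rmax a b <= c /\ b <= Rmax a b <= e).
Proof. unfold Rmax, Rmin; repeat destruct Rle_dec; intros; lra. Qed.

Theorem mainTheorem16 (VG VH : finType) (adjG : rel VG) (adjH : rel VH)
  (symG : symmetric adjG) (irrG : irreflexive adjG)
  (symH : symmetric adjH) (irrH : irreflexive adjH)
  (gamma : VG -> VH)
  (hom : forall x y, adjG x y -> adjH (gamma x) (gamma y)) :
  in_CBU adjH -> in_CBU adjG.
Proof.
move=> [d [d1 [B [Hdisj [Hadj Horth]]]]].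
set n := #|VG|.
pose NB g := @Box (d + n)%N (nlo adjG B gamma g) (nhi B gamma g) (@nlo_lt_hi _ _ adjG d B gamma g).
have L1 : forall g x, in_box (NB g) x -> in_box (B (gamma g)) x.
  move=> g x H i Hi.
  have Hi' : (i < d + n)%N by apply: leq_trans Hi (leq_addr _ _).
  have := H i Hi'; by rewrite /= /nlo /nhi Hi.
have IB : forall g x, in_interior (NB g) x -> in_box (NB g) x.
  move=> g x H i Hi; have := H i Hi; lra.
have Lneq : forall g g', adjG g g' -> gamma g <> gamma g'.
  move=> g g' A E; have := hom _ _ A; by rewrite E irrH.
have Lsep : forall g g', g <> g' -> ~~ adjG g g' -> ~ boxes_intersect (NB g) (NB g').
  move=> g g' ne nA [x [H1 H2]].
  have Hg : (index g (enum VG) < n)%N by rewrite /n cardE index_mem mem_enum.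
  have Hi : (d + index g (enum VG) < d + n)%N by rewrite ltn_add2l.
  have := H1 _ Hi; have := H2 _ Hi.
  rewrite /= /nlo /nhi ltnNge leq_addr /= addKn !nth_index ?mem_enum //.
  rewrite /elo /ehi eqxx.
  have -> : (g == g') = false by apply/eqP.
  rewrite (negbTE nA); lra.
have Lover : forall g g' i, adjG g g' -> (d <= i)%N -> (i < d + n)%N ->
    Rmax (nlo adjG B gamma g i) (nlo adjG B gamma g' i) <
    Rmin (nhi B gamma g i) (nhi B gamma g' i).
  move=> g g' i A Hi Hn; rewrite /nlo /nhi ltnNge Hi /=.
  have Hs : (i - d < n)%N by lia.
  rewrite /n cardE in Hs.
  rewrite (set_nth_default g g' Hs).
  have A' : adjG g' g by rewrite symG.
  apply: maxmin_lt; first [exact: elo_lt_ehi_self | by apply: elo_lt_ehi].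
have L2 : forall g x, in_interior (NB g) x -> in_interior (B (gamma g)) x.
  move=> g x H i Hi.
  have Hi' : (i < d + n)%N by apply: leq_trans Hi (leq_addr _ _).
  have := H i Hi'; by rewrite /= /nlo /nhi Hi.
have Ladj : forall g g', g <> g' -> adjG g g' <-> boxes_intersect (NB g) (NB g').
  move=> g g' ne; split.
  - move=> A; have ne' := Lneq _ _ A.
    have [x [H1 H2]] := proj1 (Hadj _ _ ne') (hom _ _ A).
    exists (fun i => if (i < d)%N then x i
                else Rmax (nlo adjG B gamma g i) (nlo adjG B gamma g' i)).
    split => i Hi /=; case: ifP => Hd.
    + rewrite /nlo /nhi Hd; exact: H1.
    + have := Lover g g' i A ltac:(by rewrite leqNgt Hd) Hi; move/maxmin_wit; tauto.
    + rewrite /nlo /nhi Hd; exact: H2.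
    + have := Lover g g' i A ltac:(by rewrite leqNgt Hd) Hi; move/maxmin_wit; tauto.
  - move=> I; case E: (adjG g g') => //; exfalso.
    by apply: (Lsep g g' ne); [rewrite E | exact: I].
exists (d + n)%N; split; first by rewrite addn_gt0 d1.
exists NB; split.
  move=> g g' ne [x [I1 I2]]; case E: (adjG g g').
  - by apply: (Hdisj _ _ (Lneq _ _ E)); exists x; split; apply: L2.
  - by apply: (Lsep g g' ne); [rewrite E | exists x; split; apply: IB].
split; first exact: Ladj.
move=> g g' ne I; have A := proj2 (Ladj g g' ne) I; have ne' := Lneq _ _ A.
have [x [H1 H2]] := I.
have IH : boxes_intersect (B (gamma g)) (B (gamma g')) by exists x; split; apply: L1.
have [c [l [u [Hlu Hch]]]] := Horth _ _ ne' IH.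
exists c, (fun i => if (i < d)%N then l i
               else Rmax (nlo adjG B gamma g i) (nlo adjG B gamma g' i)),
          (fun i => if (i < d)%N then u i
               else Rmin (nhi B gamma g i) (nhi B gamma g' i)).
split.
  move=> i /andP [Hi1 Hi2]; case: ifP => Hd.
  - by apply: Hlu; rewrite Hi1 Hd.
  - by apply: Lover => //; rewrite leqNgt Hd.
move=> y; split.
- move=> [Y1 Y2].
  have [Hc Hr] := proj1 (Hch y) (conj (L1 _ _ Y1) (L1 _ _ Y2)).
  split => // i /andP [Hi1 Hi2]; case: ifP => Hd.
  + by apply: Hr; rewrite Hi1 Hd.
  + apply/maxmin_iff; split; [exact: Y1 i Hi2 | exact: Y2 i Hi2].
- move=> [Hc Hr].
  have Hr' : forall i, (1 <= i < d)%N -> l i <= y i <= u i.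
    move=> i /andP [a b].
    have := Hr i; rewrite a b /= => /(_ (ltn_addr _ b)); done.
  have [HB1 HB2] := proj2 (Hch y) (conj Hc Hr').
  split => i Hi /=; case Hd: (i < d)%N.
  + rewrite /nlo /nhi Hd; exact: HB1.
  + have Hi1 : (1 <= i)%N by apply: leq_trans d1 _; rewrite leqNgt Hd.
    have := Hr i; rewrite Hi1 Hi Hd /= => /(_ isT)/maxmin_iff; rewrite /nlo /nhi Hd; tauto.
  + rewrite /nlo /nhi Hd; exact: HB2.
  + have Hi1 : (1 <= i)%N by apply: leq_trans d1 _; rewrite leqNgt Hd.
    have := Hr i; rewrite Hi1 Hi Hd /= => /(_ isT)/maxmin_iff; rewrite /nlo /nhi Hd; tauto.
Qed.
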